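(* The language $4\mathrm{MIX}=\{w\in\{a,b,c,d\}^*\mid |w|_a=|w|_b=|w|_c=|w|_d\}$ is not generated by any $1$-DCFG.
   Context: Let $\Sigma$ be a finite alphabet and $1\notin\Sigma$ a separator; $\Sigma_1=\Sigma\cup\{1\}$, $\mathrm{rk}(w)=|w|_1$. For $\mathrm{rk}(u)\ge j$, $u\odot_j v$ is obtained from $u$ by replacing its $j$-th occurrence of $1$ by $v$. Given a finite set $N$ of nonterminals with ranks in $\{0,1\}$, $1$-correct terms are built from nonterminals (their rank), words of $\Sigma^*$ (rank $0$), and $1$ (rank $1$) by $(\alpha\cdot\beta)$ (allowed if $\mathrm{rk}\alpha+\mathrm{rk}\beta\le 1$; rank the sum) and $(\alpha\odot_1\beta)$ (allowed if $\mathrm{rk}\alpha\ge1$, $\mathrm{rk}\alpha+\mathrm{rk}\beta\le 2$; rank $\mathrm{rk}\alpha+\mathrm{rk}\beta-1$). Ground terms (no nonterminals) have values in $\Sigma_1^*$ by interpreting $\cdot$ as concatenation and $\odot_1$ as intercalation. A $1$-DCFG $G=\langle N,\Sigma,P,S\rangle$ has $\mathrm{rk}(S)=0$ and finitely many rules $A\to\alpha$ with $\alpha$ a $1$-correct term of rank $\mathrm{rk}(A)$; derivability $\vdash_G$ is the least reflexive transitive relation such that $A\vdash_G C[B]$ and $(B\to\beta)\in P$ imply $A\vdash_G C[\beta]$ for every context $C$ (term with a single variable leaf); $L(G)$ is the set of values of ground terms $\alpha$ with $S\vdash_G\alpha$. *)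

(* Defs.v *)
From mathcomp Require Import all_boot.
From Stdlib Require Import Relations.
From Stdlib Require List.
Set Implicit Arguments. Unset Strict Implicit. Unset Printing Implicit Defensive.

(* Letters of Sigma_1 = Sigma ∪ {1}: [Some a] is the letter a, [None] is the separator 1. *)
Definition letter1 (Sigma : Type) := option Sigma.

Fixpoint intercal1 (Sigma : Type) (u v : seq (letter1 Sigma)) : seq (letter1 Sigma) :=
  match u with
  | [::] => [::]
  | None :: u' => v ++ u'
  | Some a :: u' => Some a :: intercal1 u' v
  end.

Inductive term (N Sigma : Type) :=
| TNT : N -> term N Sigma
| TWord : seq Sigma -> term N Sigma
| TOne : term N Sigma
| TCat : term N Sigma -> term N Sigma -> term N Sigma
| TIns : term N Sigma -> term N Sigma -> term N Sigma.

Arguments TNT {N Sigma}.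
Arguments TWord {N Sigma}.
Arguments TOne {N Sigma}.
Arguments TCat {N Sigma}.
Arguments TIns {N Sigma}.

Section Terms.
Variables (N Sigma : Type) (rkN : N -> nat).

Fixpoint trank (t : term N Sigma) : nat :=
  match t with
  | TNT A => rkN A
  | TWord _ => 0
  | TOne => 1
  | TCat a b => trank a + trank b
  | TIns a b => trank a + trank b - 1
  end.

Fixpoint correct1 (t : term N Sigma) : bool :=
  match t with
  | TNT A => rkN A <= 1
  | TWord _ => true
  | TOne => true
  | TCat a b => [&& correct1 a, correct1 b & trank a + trank b <= 1]
  | TIns a b => [&& correct1 a, correct1 b, 1 <= trank a & trank a + trank b <= 2]
  end.

Fixpoint ground (t : term N Sigma) : bool :=
  match t with
  | TNT _ => false
  | TWord _ | TOne => true
  | TCat a b | TIns a b => ground a && ground b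
  end.

(* value of a term (meaningful for ground terms) *)
Fixpoint tvalue (t : term N Sigma) : seq (letter1 Sigma) :=
  match t with
  | TNT _ => [::]
  | TWord w => map Some w
  | TOne => [:: None]
  | TCat a b => tvalue a ++ tvalue b
  | TIns a b => intercal1 (tvalue a) (tvalue b)
  end.

End Terms.

Record dcfg1 (Sigma : Type) := Dcfg1 {
  nt : finType;
  nt_rank : nt -> nat;
  nt_rank_le1 : forall A, nt_rank A <= 1;
  rules : seq (nt * term nt Sigma);
  start : nt;
  start_rank : nt_rank start = 0;
  rules_ok : all (fun r => correct1 nt_rank r.2 && (trank nt_rank r.2 == nt_rank r.1)) rules
}.

Section Derivation.
Variables (Sigma : Type) (G : dcfg1 Sigma).

Inductive step : term (nt G) Sigma -> term (nt G) Sigma -> Prop :=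
| step_rule B beta : List.In (B, beta) (rules G) -> step (TNT B) beta
| step_catl a a' b : step a a' -> step (TCat a b) (TCat a' b)
| step_catr a b b' : step b b' -> step (TCat a b) (TCat a b')
| step_insl a a' b : step a a' -> step (TIns a b) (TIns a' b)
| step_insr a b b' : step b b' -> step (TIns a b) (TIns a b').

Definition derives (A : nt G) (alpha : term (nt G) Sigma) : Prop :=
  clos_refl_trans _ step (TNT A) alpha.

Definition lang (w : seq (letter1 Sigma)) : Prop :=
  exists alpha, derives (start G) alpha /\ ground alpha /\ tvalue alpha = w.

End Derivation.

Inductive abcd := La | Lb | Lc | Ld.

Definition count_letter (x : abcd) (w : seq abcd) : nat :=
  count (fun y => match x, y with
                  | La, La | Lb, Lb | Lc, Lc | Ld, Ld => true
                  | _, _ => false end) w.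

Definition fourMIX (w : seq abcd) : Prop :=
  count_letter La w = count_letter Lb w /\
  count_letter Lb w = count_letter Lc w /\
  count_letter Lc w = count_letter Ld w.

(* Main.v *)
Require Import Defs.
From HB Require Import structures.
From mathcomp Require Import all_boot.
From mathcomp Require Import zify.
From Stdlib Require Import Relations Classical.
Set Implicit Arguments. Unset Strict Implicit. Unset Printing Implicit Defensive.

Definition abcd_eqb (x y : abcd) : bool :=
  match x, y with La, La | Lb, Lb | Lc, Lc | Ld, Ld => true | _, _ => false end.
Lemma abcd_eqP : Equality.axiom abcd_eqb.
Proof. by case; case; constructor. Qed.
HB.instance Definition _ := hasDecEq.Build abcd abcd_eqP.

Definition isNone (o : option abcd) := if o is None then true else false.
Definition cnt (x : abcd) (s : seq (option abcd)) := count (pred1 (Some x)) s.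
Definition len (s : seq (option abcd)) := count (fun o => ~~ isNone o) s.

Lemma first_none s : has isNone s ->
  exists s1 s2, s = s1 ++ None :: s2 /\ ~~ has isNone s1.
Proof.
elim: s => [|o s IH] //=; case: o => [x|] /=.
- by move=> /IH [s1 [s2 [-> H]]]; exists (Some x :: s1), s2.
- by move=> _; exists [::], s.
Qed.

Lemma ic_nonefree (u v : seq (option abcd)) : ~~ has isNone u -> intercal1 u v = u.
Proof. by elim: u => [|[x|] u IH] //= H; rewrite IH. Qed.

Lemma ic_split (u1 u2 v : seq (option abcd)) : ~~ has isNone u1 ->
  intercal1 (u1 ++ None :: u2) v = u1 ++ v ++ u2.
Proof. by elim: u1 => [|[x|] u IH] //= H; rewrite IH. Qed.

Lemma ic_cat (x y z : seq (option abcd)) : intercal1 (x ++ y) z =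
  if has isNone x then intercal1 x z ++ y else x ++ intercal1 y z.
Proof.
elim: x => [|[a|] x IH] //=; first by rewrite IH; case: ifP.
by rewrite catA.
Qed.

Lemma cnt_ic x u v : has isNone u -> cnt x (intercal1 u v) = cnt x u + cnt x v.
Proof.
move=> /first_none [u1 [u2 [-> H]]]; rewrite ic_split // /cnt !count_cat /=. lia.
Qed.

Lemma len_ic u v : len (intercal1 u v) <= len u + len v.
Proof.
case: (boolP (has isNone u)) => H.
- move: H => /first_none [u1 [u2 [-> H]]]; rewrite ic_split // /len !count_cat /=. lia.
- rewrite ic_nonefree //; exact: leq_addr.
Qed.

Lemma nn_ic u v : has isNone u ->
  count isNone (intercal1 u v) = count isNone u + count isNone v - 1.
Proof.
move=> /first_none [u1 [u2 [-> H]]]; rewrite ic_split // !count_cat /=.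
move: H; rewrite has_count -leqNgt leqn0 => /eqP ->. lia.
Qed.

Lemma len_mapSome (w : seq abcd) : len (map Some w) = size w.
Proof. by elim: w => //= ? ? ->. Qed.

Lemma cnt_mapSome x (w : seq abcd) : cnt x (map Some w) = count_letter x w.
Proof. by elim: w => //= y w ->; case: x; case: y. Qed.

Lemma len_cnt s : len s = cnt La s + cnt Lb s + cnt Lc s + cnt Ld s.
Proof. rewrite /len /cnt; elim: s => [|[[]|] s IH] //=; rewrite IH; move: (count_mem (Some La) s) (count_mem (Some Lb) s) (count_mem (Some Lc) s) (count_mem (Some Ld) s) => *; lia. Qed.

Lemma allIn T (P : pred T) s x : all P s -> List.In x s -> P x.
Proof. elim: s => //= y s IH /andP [Hy Hs] [<-|Hin]; auto. Qed.

Lemma in_sumn (T : Type) (f : T -> nat) s x : List.In x s -> f x <= sumn (map f s).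
Proof.
elim: s => //= y s IH [<-|H]; first exact: leq_addr.
exact: leq_trans (IH H) (leq_addl _ _).
Qed.

Lemma len_cat x y : len (x ++ y) = len x + len y.
Proof. by rewrite /len count_cat. Qed.

Section Main.
Variable G : dcfg1 abcd.
Local Notation tm := (term (nt G) abcd).
Local Notation rk := (@nt_rank abcd G).

Inductive GenT : tm -> tm -> Prop :=
| g_nt B beta g : List.In (B, beta) (rules G) -> GenT beta g -> GenT (TNT B) g
| g_word w : GenT (TWord w) (TWord w)
| g_one : GenT TOne TOne
| g_cat a b a' b' : GenT a a' -> GenT b b' -> GenT (TCat a b) (TCat a' b')
| g_ins a b a' b' : GenT a a' -> GenT b b' -> GenT (TIns a b) (TIns a' b').

Lemma gen_ground b g : GenT b g -> ground g.
Proof. by elim=> //= ? ? ? ? _ -> _ ->. Qed.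

Lemma ground_gen (g : tm) : ground g -> GenT g g.
Proof.
elim: g => //= [w||a IHa b IHb|a IHa b IHb].
- move=> _; constructor.
- move=> _; constructor.
- by case/andP=> Ha Hb; constructor; auto.
- by case/andP=> Ha Hb; constructor; auto.
Qed.

Lemma step_back (b b' : tm) : step b b' -> forall g, GenT b' g -> GenT b g.
Proof.
induction 1; intros g Hg.
- econstructor; eauto.
- inversion Hg; subst; constructor; auto.
- inversion Hg; subst; constructor; auto.
- inversion Hg; subst; constructor; auto.
- inversion Hg; subst; constructor; auto.
Qed.

Lemma sound (b g : tm) : clos_refl_trans _ (@step _ G) b g -> ground g -> GenT b g.
Proof.
move=> H; have := clos_rt_rt1n _ _ _ _ H; clear H; elim => [x|x y z Hs _ IH] Hg; first exact: ground_gen.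
exact: step_back Hs _ (IH Hg).
Qed.

Lemma rt_congr (f : tm -> tm) : (forall x y, step x y -> step (f x) (f y)) ->
  forall x y, clos_refl_trans _ (@step _ G) x y -> clos_refl_trans _ (@step _ G) (f x) (f y).
Proof.
move=> Hf; induction 1; [apply rt_step; auto | apply rt_refl | eapply rt_trans; eauto].
Qed.

Lemma complete (b g : tm) : GenT b g -> clos_refl_trans _ (@step _ G) b g.
Proof.
induction 1.
- eapply rt_trans; [apply rt_step, step_rule; eauto | exact IHGenT].
- apply rt_refl.
- apply rt_refl.
- eapply rt_trans.
  + apply: (rt_congr (f := fun x => TCat x b)) IHGenT1 => x y; exact: step_catl.
  + apply: (rt_congr (f := fun y => TCat a' y)) IHGenT2 => x y; exact: step_catr.
- eapply rt_trans.
  + apply: (rt_congr (f := fun x => TIns x b)) IHGenT1 => x y; exact: step_insl.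
  + apply: (rt_congr (f := fun y => TIns a' y)) IHGenT2 => x y; exact: step_insr.
Qed.

Lemma in_rules B beta : List.In (B, beta) (rules G) ->
  correct1 rk beta /\ trank rk beta = rk B.
Proof.
move=> H; have := allIn (rules_ok G) H => /= /andP [Hc /eqP He]; by split.
Qed.

Lemma rank_gen b g : GenT b g -> correct1 rk b -> count isNone (tvalue g) = trank rk b.
Proof.
elim => /= [B beta g0 Hin _ IH | w | | a b0 a' b' _ IHa _ IHb | a b0 a' b' _ IHa _ IHb] Hc.
- by case: (in_rules Hin) => Hc' <-; apply: IH.
- by elim: w.
- by [].
- case/and3P: Hc => ha hb _; by rewrite count_cat IHa // IHb.
- case/and4P: Hc => ha hb h1 h2.
  have Hva := IHa ha; have Hvb := IHb hb.
  have Hh : has isNone (tvalue a') by rewrite has_count Hva.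
  rewrite nn_ic // Hva Hvb; lia.
Qed.

Lemma correct_le1 (b : tm) : correct1 rk b -> trank rk b <= 1.
Proof.
elim: b => //= [a IHa b IHb|a IHa b IHb].
- by case/and3P.
- case/and4P => _ _ _ h; lia.
Qed.

Lemma has_none_gen a a' : GenT a a' -> correct1 rk a -> 1 <= trank rk a ->
  has isNone (tvalue a').
Proof. by move=> H Hc; rewrite has_count (rank_gen H Hc). Qed.

Inductive HasSub : tm -> tm -> nt G -> tm -> Prop :=
| hs_here B g : GenT (TNT B) g -> HasSub (TNT B) g B g
| hs_nt B' beta g B g1 : List.In (B', beta) (rules G) -> HasSub beta g B g1 ->
    HasSub (TNT B') g B g1
| hs_catl a b a' b' B g1 : HasSub a a' B g1 -> GenT b b' -> HasSub (TCat a b) (TCat a' b') B g1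
| hs_catr a b a' b' B g1 : GenT a a' -> HasSub b b' B g1 -> HasSub (TCat a b) (TCat a' b') B g1
| hs_insl a b a' b' B g1 : HasSub a a' B g1 -> GenT b b' -> HasSub (TIns a b) (TIns a' b') B g1
| hs_insr a b a' b' B g1 : GenT a a' -> HasSub b b' B g1 -> HasSub (TIns a b) (TIns a' b') B g1.

Lemma hs_gen b g B g1 : HasSub b g B g1 -> GenT b g /\ GenT (TNT B) g1.
Proof.
induction 1; try (case: IHHasSub => ? ?); split; auto.
- econstructor; eauto.
- constructor; auto.
- constructor; auto.
- constructor; auto.
- constructor; auto.
Qed.

Lemma factor b g B g1 : HasSub b g B g1 -> correct1 rk b ->
  exists u v p q r, (tvalue g1 = u ++ v \/ tvalue g1 = u ++ None :: v) /\
    ~~ has isNone u /\ ~~ has isNone v /\ tvalue g = p ++ u ++ q ++ v ++ r.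
Proof.
induction 1 => /= Hc.
- have := rank_gen H Hc => /= Hr.
  have Hle : rk B <= 1 by [].
  case: (boolP (has isNone (tvalue g))) => Hn.
  + case: (first_none Hn) => s1 [s2 [Hs H1]].
    have H2 : ~~ has isNone s2.
      move: Hr; rewrite Hs count_cat /= has_count -leqNgt leqn0.
      move: H1; rewrite has_count -leqNgt leqn0 => /eqP ->.
      move=> Hr; apply/eqP; lia.
    exists s1, s2, [::], [:: None], [::].
    split; first by right.
    split => //; split => //. by rewrite Hs /= cats0.
  + exists (tvalue g), [::], [::], [::], [::].
    split; first by left; rewrite cats0.
    split => //; split => //. by rewrite /= cats0.
- case: (in_rules H) => Hc' _; exact: IHHasSub Hc'.
- case/and3P: Hc => ha _ _.
  case: (IHHasSub ha) => u [v [p [q [r [H1 [H2 [H3 H4]]]]]]].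
  exists u, v, p, q, (r ++ tvalue b'); do !split => //. by rewrite H4 !catA.
- case/and3P: Hc => _ hb _.
  case: (IHHasSub hb) => u [v [p [q [r [H1 [H2 [H3 H4]]]]]]].
  exists u, v, (tvalue a' ++ p), q, r; do !split => //. by rewrite H4 !catA.
- case/and4P: Hc => ha _ _ _.
  case: (IHHasSub ha) => u [v [p [q [r [H1 [H2 [H3 H4]]]]]]].
  rewrite H4 !ic_cat (negbTE H2) (negbTE H3).
  case: ifP => hp.
    by exists u, v, (intercal1 p (tvalue b')), q, r.
  case: ifP => hq.
    by exists u, v, p, (intercal1 q (tvalue b')), r.
  by exists u, v, p, q, (intercal1 r (tvalue b')).
- case/and4P: Hc => ha hb h1 _.
  case: (IHHasSub hb) => u [v [p [q [r [H1 [H2 [H3 H4]]]]]]].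
  have := has_none_gen H ha h1 => /first_none [a1 [a2 [Ha Ha1]]].
  rewrite Ha ic_split // H4.
  exists u, v, (a1 ++ p), q, (r ++ a2); do !split => //. by rewrite !catA.
Qed.

Lemma swap b g B g1 : HasSub b g B g1 -> correct1 rk b ->
  forall g2, GenT (TNT B) g2 -> exists g', GenT b g' /\
    forall x, cnt x (tvalue g') + cnt x (tvalue g1) = cnt x (tvalue g) + cnt x (tvalue g2).
Proof.
induction 1 => /= Hc g2 Hg2.
- by exists g2; split => // x; rewrite addnC.
- case: (in_rules H) => Hc' _.
  case: (IHHasSub Hc' g2 Hg2) => g' [H1 H2]; exists g'; split => //; econstructor; eauto.
- case/and3P: Hc => ha _ _.
  case: (IHHasSub ha g2 Hg2) => g' [H1 H2]; exists (TCat g' b'); split; first by constructor.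
  move=> x /=; rewrite /cnt !count_cat; have := H2 x; rewrite /cnt.
  move: (count _ _) (count _ _) (count _ _) (count _ _) (count _ _) => *; lia.
- case/and3P: Hc => _ hb _.
  case: (IHHasSub hb g2 Hg2) => g' [H1 H2]; exists (TCat a' g'); split; first by constructor.
  move=> x /=; rewrite /cnt !count_cat; have := H2 x; rewrite /cnt.
  move: (count _ _) (count _ _) (count _ _) (count _ _) (count _ _) => *; lia.
- case/and4P: Hc => ha _ h1 _.
  case: (IHHasSub ha g2 Hg2) => g' [H1 H2]; exists (TIns g' b'); split; first by constructor.
  have Hn := has_none_gen (proj1 (hs_gen H)) ha h1.
  have Hn' := has_none_gen H1 ha h1.
  move=> x /=; rewrite !cnt_ic //; have := H2 x.
  move: (cnt _ _) (cnt _ _) (cnt _ _) (cnt _ _) (cnt _ _) => *; lia.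
- case/and4P: Hc => ha hb h1 _.
  case: (IHHasSub hb g2 Hg2) => g' [H1 H2]; exists (TIns a' g'); split; first by constructor.
  have Hn := has_none_gen H ha h1.
  move=> x /=; rewrite !cnt_ic //; have := H2 x.
  move: (cnt _ _) (cnt _ _) (cnt _ _) (cnt _ _) (cnt _ _) => *; lia.
Qed.

Fixpoint wl (t : tm) : nat :=
  match t with TNT _ => 0 | TWord w => size w | TOne => 0
  | TCat a b => wl a + wl b | TIns a b => wl a + wl b end.
Fixpoint nn (t : tm) : nat :=
  match t with TNT _ => 1 | TWord w => 0 | TOne => 0
  | TCat a b => nn a + nn b | TIns a b => nn a + nn b end.
Definition Wb := sumn (map (fun r => wl r.2) (rules G)).
Definition Mb := sumn (map (fun r => nn r.2) (rules G)).

Lemma window T b g : GenT b g -> wl b + nn b * T < len (tvalue g) ->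
  exists B g1, HasSub b g B g1 /\ T < len (tvalue g1) <= Wb + Mb * T.
Proof.
move=> Hg; elim: Hg => /= [B beta g0 Hin Hb IH | w | | a b0 a' b' Ga IHa Gb IHb
   | a b0 a' b' Ga IHa Gb IHb] Hl.
- case: (leqP (len (tvalue g0)) (Wb + Mb * T)) => Hle.
    exists B, g0; split; [apply: hs_here; econstructor; eauto | apply/andP; split => //; lia].
  have h1 := in_sumn (fun r => wl r.2) Hin.
  have h2 := in_sumn (fun r => nn r.2) Hin.
  have h3 : nn beta * T <= Mb * T by apply: leq_mul.
  rewrite /= -/Wb -/Mb in h1 h2.
  case: IH; first by lia.
  move=> B1 [g1 [H1 H2]]; exists B1, g1; split => //; econstructor; eauto.
- by move: Hl; rewrite len_mapSome; lia.
- by [].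
- move: Hl; rewrite len_cat mulnDl => Hl.
  have HH: (wl a + nn a * T < len (tvalue a')) \/ (wl b0 + nn b0 * T < len (tvalue b')).
    move: (nn a * T) (nn b0 * T) (len (tvalue a')) (len (tvalue b')) Hl => *; lia.
  case: HH => [Ha1|Hb1].
  + case: (IHa Ha1) => B1 [g1 [H1 H2]]; exists B1, g1; split => //; exact: hs_catl.
  + case: (IHb Hb1) => B1 [g1 [H1 H2]]; exists B1, g1; split => //; exact: hs_catr.
- have Hic := len_ic (tvalue a') (tvalue b').
  move: Hl; rewrite ?mulnDl => Hl.
  have HH: (wl a + nn a * T < len (tvalue a')) \/ (wl b0 + nn b0 * T < len (tvalue b')).
    move: (nn a * T) (nn b0 * T) (len (tvalue a')) (len (tvalue b')) (len (intercal1 _ _)) Hl Hic => *; lia.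
  case: HH => [Ha1|Hb1].
  + case: (IHa Ha1) => B1 [g1 [H1 H2]]; exists B1, g1; split => //; exact: hs_insl.
  + case: (IHb Hb1) => B1 [g1 [H1 H2]]; exists B1, g1; split => //; exact: hs_insr.
Qed.

Definition useful B g1 := exists g v,
  HasSub (TNT (start G)) g B g1 /\ tvalue g = map Some v /\ fourMIX v.

Lemma mix_eq v x y : fourMIX v -> count_letter x v = count_letter y v.
Proof. case=> [h1 [h2 h3]]; by case: x; case: y; lia. Qed.

Lemma imb (Hlang : forall w, lang G w <-> exists v, w = map Some v /\ fourMIX v)
  B g1 g2 : useful B g1 -> useful B g2 -> forall x y,
  cnt x (tvalue g1) + cnt y (tvalue g2) = cnt y (tvalue g1) + cnt x (tvalue g2).
Proof.
move=> [g [v [H1 [H2 H3]]]] [g4 [v4 [H4 _]]] x y.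
have Hc : correct1 rk (TNT (start G) : tm) by rewrite /= nt_rank_le1.
case: (swap H1 Hc (proj2 (hs_gen H4))) => g' [Hg' Hcnt].
have : lang G (tvalue g').
  exists g'; split; last split => //; [exact: complete | exact: gen_ground Hg'].
case/Hlang => v' [Hv' Hm'].
have := Hcnt x; have := Hcnt y; rewrite H2 Hv' !cnt_mapSome.
rewrite (mix_eq x y H3) (mix_eq x y Hm').
move: (count_letter _ _) (count_letter _ _) (cnt _ _) (cnt _ _) (cnt _ _) (cnt _ _) => *; lia.
Qed.

Lemma fin_bound (P : nt G -> nat -> Prop) :
  (forall x k k', k <= k' -> P x k -> P x k') -> (forall x, exists k, P x k) ->
  exists K, forall x, P x K.
Proof.
move=> Hm Hex.
suff [K HK] : exists K, forall x, x \in enum (nt G) -> P x K.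
  by exists K => x; apply: HK; rewrite mem_enum.
elim: (enum (nt G)) => [|y s [K HK]]; first by exists 0.
case: (Hex y) => k Hk; exists (maxn k K) => x; rewrite in_cons => /orP [/eqP ->|Hx].
- apply: Hm Hk; exact: leq_maxl.
- apply: Hm (HK x Hx); exact: leq_maxr.
Qed.

Lemma bound (Hlang : forall w, lang G w <-> exists v, w = map Some v /\ fourMIX v) :
  exists K, forall B g1, useful B g1 -> forall x y, cnt x (tvalue g1) <= cnt y (tvalue g1) + K.
Proof.
apply: (fin_bound (P := fun B K => forall g1, useful B g1 ->
          forall x y, cnt x (tvalue g1) <= cnt y (tvalue g1) + K)).
- move=> B k k' Hk H g1 Hu x y; apply: leq_trans (H g1 Hu x y) _; by rewrite leq_add2l.
- move=> B; case: (classic (exists g, useful B g)) => [[g Hg]|Hn].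
  + exists (cnt La (tvalue g) + cnt Lb (tvalue g) + cnt Lc (tvalue g) + cnt Ld (tvalue g)).
    move=> g1 Hu x y; have := imb Hlang Hu Hg x y.
    have Hx : cnt x (tvalue g) <= cnt La (tvalue g) + cnt Lb (tvalue g) + cnt Lc (tvalue g) + cnt Ld (tvalue g).
      by case: x; move: (cnt _ _) (cnt _ _) (cnt _ _) (cnt _ _) => *; lia.
    move: Hx; move: (cnt La _) (cnt Lb _) (cnt Lc _) (cnt Ld _) (cnt x _) (cnt y _) (cnt x (tvalue g)) (cnt y (tvalue g)) => *; lia.
  + exists 0 => g1 Hu; exfalso; apply: Hn; by exists g1.
Qed.

End Main.

Definition word n : seq abcd := nseq n La ++ nseq (3*n) Lb ++ nseq n La ++ nseq (3*n) Lc
  ++ nseq n La ++ nseq (3*n) Ld.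

Lemma size_word n : size (word n) = 12 * n.
Proof. rewrite /word !size_cat !size_nseq; lia. Qed.

Lemma word_mix n : fourMIX (word n).
Proof. rewrite /fourMIX /count_letter /word !count_cat !count_nseq /=; lia. Qed.

Lemma nth_word n k : nth La (word n) k =
  if k < n then La else if k < 4*n then Lb else if k < 5*n then La
  else if k < 8*n then Lc else if k < 9*n then La else if k < 12*n then Ld else La.
Proof.
rewrite /word !nth_cat !size_nseq !nth_nseq.
repeat (case: ifP => ?); try reflexivity; exfalso; lia.
Qed.

Lemma pos_all n k x : nth La (word n) k = x -> k < 12 * n ->
  (x = Lb -> n <= k < 4 * n) /\ (x = Lc -> 5 * n <= k < 8 * n) /\ (x = Ld -> 9 * n <= k).
Proof.
rewrite nth_word => <- Hk.
case: ifP => h1; first by split => //; split.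
case: ifP => h2; first by split; [lia | split].
case: ifP => h3; first by split => //; split.
case: ifP => h4; first by split => //; split => //; lia.
case: ifP => h5; first by split => //; split.
case: ifP => h6; last lia.
split => //; split => //; lia.
Qed.

Lemma nonefree_len s : ~~ has isNone s -> len s = size s.
Proof. by elim: s => [|[x|] s IH] //= H; rewrite IH. Qed.

Lemma occ n p f s x : map Some (word n) = p ++ f ++ s -> 0 < cnt x f ->
  exists i, i < size f /\ nth La (word n) (size p + i) = x /\ size p + i < 12 * n.
Proof.
move=> Hw; rewrite /cnt -has_count has_pred1 => /(nthP None) [i Hi Hn].
exists i; split => //.
have Hk : size p + i < size (map Some (word n)) by rewrite Hw !size_cat; move: Hi; move: (size p) (size f) (size s) => *; lia.
have : nth None (map Some (word n)) (size p + i) = Some x.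
  by rewrite Hw nth_cat ltnNge leq_addr /= addKn nth_cat Hi.
rewrite size_map size_word in Hk.
rewrite (nth_map La) ?size_word // => [[->]]; by split.
Qed.

Lemma fac2 n p f s x y : map Some (word n) = p ++ f ++ s -> size f < n ->
  x != La -> y != La -> x != y -> cnt x f = 0 \/ cnt y f = 0.
Proof.
move=> Hw Hs Hx Hy Hxy.
case: (posnP (cnt x f)) => Hcx; [by left|].
case: (posnP (cnt y f)) => Hcy; [by right|].
case: (occ Hw Hcx) => i [Hi [Ei Ki]].
case: (occ Hw Hcy) => j [Hj [Ej Kj]].
exfalso; clear Hcx Hcy Hw.
have [a1 [a2 a3]] := pos_all Ei Ki; have [b1 [b2 b3]] := pos_all Ej Kj.
move: Hx Hy Hxy a1 a2 a3 b1 b2 b3 Hs Hi Hj; move: (size p) (size f) => P F.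
clear Ei Ej; case: x; case: y => //= _ _ _ a1 a2 a3 b1 b2 b3 Hs Hi Hj;
first [have := a1 erefl | have := a2 erefl | have := a3 erefl];
first [have := b1 erefl | have := b2 erefl | have := b3 erefl]; lia.
Qed.

Theorem theorem5 :
  ~ exists G : dcfg1 abcd,
      forall w : seq (letter1 abcd),
        lang G w <-> exists v : seq abcd, w = map Some v /\ fourMIX v.
Proof.
move=> [G Hlang].
case: (bound Hlang) => K HK.
pose T := 4 * K.
pose n := Wb G + Mb G * T + T + 1.
have : lang G (map Some (word n)) by apply/Hlang; exists (word n); split => //; exact: word_mix.
case=> al [Hd [Hgr Hv]].
have Hg := sound Hd Hgr.
case: (window (T:=T) Hg).
  by rewrite /= Hv len_mapSome size_word /n; lia.
move=> B [g1 [Hs Hlen]].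
have Hu : useful B g1 by exists al, (word n); split => //; split => //; exact: word_mix.
have Hb := HK B g1 Hu.
have Hc : correct1 (@nt_rank _ G) (TNT (start G) : term (nt G) abcd) by rewrite /= nt_rank_le1.
case: (factor Hs Hc) => u [v [p [q [r [Hg1 [Hu' [Hv' Hw]]]]]]].
have Hcnt : forall z, cnt z (tvalue g1) = cnt z u + cnt z v.
  by move=> z; case: Hg1 => ->; rewrite /cnt !count_cat.
have Hl : len (tvalue g1) = len u + len v.
  by case: Hg1 => ->; rewrite !len_cat.
rewrite Hv in Hw.
have Hwu : map Some (word n) = p ++ u ++ (q ++ v ++ r) by [].
have Hwv : map Some (word n) = (p ++ u ++ q) ++ v ++ r by rewrite Hw -!catA.
have Su : size u < n by rewrite -nonefree_len // /n; lia.
have Sv : size v < n by rewrite -nonefree_len // /n; lia.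
have u1 := fac2 Hwu Su (isT : Lb != La) (isT : Lc != La) (isT : Lb != Lc).
have u2 := fac2 Hwu Su (isT : Lb != La) (isT : Ld != La) (isT : Lb != Ld).
have u3 := fac2 Hwu Su (isT : Lc != La) (isT : Ld != La) (isT : Lc != Ld).
have v1 := fac2 Hwv Sv (isT : Lb != La) (isT : Lc != La) (isT : Lb != Lc).
have v2 := fac2 Hwv Sv (isT : Lb != La) (isT : Ld != La) (isT : Lb != Ld).
have v3 := fac2 Hwv Sv (isT : Lc != La) (isT : Ld != La) (isT : Lc != Ld).
have := len_cnt (tvalue g1); rewrite !Hcnt.
have := Hb La Lb; have := Hb La Lc; have := Hb La Ld;
have := Hb Lb Lc; have := Hb Lb Ld; have := Hb Lc Lb; have := Hb Lc Ld;
have := Hb Ld Lb; have := Hb Ld Lc; have := Hb Lb Lb; rewrite !Hcnt.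
move: Hlen u1 u2 u3 v1 v2 v3; rewrite /T.
move: (len (tvalue g1)) (cnt La u) (cnt Lb u) (cnt Lc u) (cnt Ld u)
  (cnt La v) (cnt Lb v) (cnt Lc v) (cnt Ld v) => *; lia.
Qed.
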